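(* Let $\mathcal P\subseteq 2^{[n]}$ be a nonempty intersection-closed family. Let $\mathcal F(\Delta_{\mathcal P})$ be the labeled cellular chain complex of free $S$-modules supported on the order complex $\Delta_{\mathcal P}$, where each vertex $A\in\mathcal P$ is labeled by $m(A,A)$, each face is labeled by the lcm of the labels of its vertices, and the empty face is labeled by $1$. Explicitly, $F_i=\bigoplus_{\sigma} S\,e_\sigma$ over $i$-faces $\sigma$ of $\Delta_{\mathcal P}$ (for $i\ge -1$, with $F_{-1}=S$), $e_\sigma$ of multidegree $m_\sigma$ (the label of $\sigma$), and for $\sigma=\{C_0<\dots<C_i\}$, $\partial(e_\sigma)=\sum_{j=0}^{i}(-1)^j\frac{m_\sigma}{m_{\sigma\setminus\{C_j\}}}e_{\sigma\setminus\{C_j\}}$. Then $\mathcal F(\Delta_{\mathcal P})$ is acyclic, and hence is a (multigraded) $S$-free resolution of $S/I^\star_{\mathtt C(\mathcal P)}$.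
   Context: For $n\in\mathbb N$ let $[n]=\{0,\dots,n-1\}$. Fix a field $\Bbbk$ and let $S=\Bbbk[x_{(i,b)}: i\in[n], b\in\{0,1\}]$. For a family $\mathcal P\subseteq 2^{[n]}$ (partially ordered by inclusion), $\mathtt C(\mathcal P)=\{\mathbf 1_A: A\in\mathcal P\}$ is the associated class of indicator functions $[n]\to\{0,1\}$. $\mathcal P$ is intersection-closed if $A,B\in\mathcal P\Rightarrow A\cap B\in\mathcal P$. For a function class $\mathtt C$, $I^\star_{\mathtt C}=\langle\prod_{i\in[n]}x_{(i,1-f(i))}: f\in\mathtt C\rangle\subseteq S$. For $A\subseteq B\subseteq[n]$, $m(A,B):=\prod_{i\in A}x_{(i,0)}\prod_{i\notin B}x_{(i,1)}\prod_{i\in B\setminus A}x_{(i,0)}x_{(i,1)}$; in particular $I^\star_{\mathtt C(\mathcal P)}=\langle m(A,A):A\in\mathcal P\rangle$. The order complex $\Delta_{\mathcal P}$ is the simplicial complex whose $i$-faces are the chains $C_0<C_1<\dots<C_i$ in $\mathcal P$. *)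

(* Defs.v *)
From HB Require Import structures.
From mathcomp Require Import all_boot all_order all_algebra.
Set Implicit Arguments. Unset Strict Implicit. Unset Printing Implicit Defensive.
Import GRing.Theory.
Local Open Scope ring_scope.

(* Variables x_(i,b) of S = k[x_(i,b) : i in [n], b in {0,1}] are indexed by
   'I_n * bool (false = 0, true = 1).  A monomial of S is its exponent vector. *)
Definition mono (n : nat) := {ffun 'I_n * bool -> nat}.

Definition mono1 (n : nat) : mono n := [ffun _ => 0%N].
Definition mono_lcm n (u v : mono n) : mono n := [ffun x => maxn (u x) (v x)].
Definition mono_dvd n (u v : mono n) : bool := [forall x, (u x <= v x)%N].
(* v / u (meaningful when u divides v) *)
Definition mono_div n (v u : mono n) : mono n := [ffun x => (v x - u x)%N].

(* m(A,B) = prod_{i in A} x_(i,0) prod_{i notin B} x_(i,1)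
            prod_{i in B\A} x_(i,0) x_(i,1) *)
Definition mAB n (A B : {set 'I_n}) : mono n :=
  [ffun x => let: (i, b) := x in
     if ~~ b then ((i \in A) || (i \in B :\: A) : nat)
     else ((i \notin B) || (i \in B :\: A) : nat)].

Definition vlabel n (A : {set 'I_n}) : mono n := mAB A A.

Definition intersection_closed n (P : {set {set 'I_n}}) : Prop :=
  forall A B, A \in P -> B \in P -> A :&: B \in P.

(* faces of the order complex Delta_P: chains of P (empty chain included);
   a face with i+1 elements is an i-face *)
Definition isFace n (P : {set {set 'I_n}}) (s : {set {set 'I_n}}) : bool :=
  (s \subset P) && [forall A in s, forall B in s, (A \subset B) || (B \subset A)].

Definition flabel n (s : {set {set 'I_n}}) : mono n :=
  \big[@mono_lcm n/mono1 n]_(A in s) vlabel A.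

(* Elements of the whole labeled complex: coefficient functions
   c sigma u = coefficient of u * e_sigma  (u a monomial of S). *)
Definition chain (k : fieldType) n := {set {set 'I_n}} -> mono n -> k.

Definition inF (k : fieldType) n (P : {set {set 'I_n}}) (i : nat) (c : chain k n)
  : Prop :=
  (forall s u, c s u != 0 -> isFace P s && (#|s| == i.+1)%N) /\
  (exists l : seq ({set {set 'I_n}} * mono n),
      forall s u, c s u != 0 -> (s, u) \in l).

(* For sigma = {C_0 < ... < C_i} and C = C_j, the sign
   is (-1)^j with j = #{D in sigma | D proper subset of C}.  By S-linearity,
   d(u e_sigma) = sum_j (-1)^j u (m_sigma / m_{sigma \ C_j}) e_{sigma \ C_j};
   so the coefficient of w e_tau in d c is the sum, over the C in P \ tau with
   sigma = C |: tau a face, of (-1)^j c sigma (w / q) where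
   q = m_sigma / m_tau, provided q divides w. *)
Definition bd (k : fieldType) n (P : {set {set 'I_n}}) (c : chain k n) : chain k n :=
  fun t w =>
    if isFace P t then
      \sum_(C : {set 'I_n} | (C \in P) && (C \notin t) && isFace P (C |: t))
        let q := mono_div (flabel (C |: t)) (flabel t) in
        (-1) ^+ #|[set D in t | D \proper C]| *
        (if mono_dvd q w then c (C |: t) (mono_div w q) else 0)
    else 0.

(* Main.v *)
Require Import Defs.
From HB Require Import structures.
From mathcomp Require Import all_boot all_order all_algebra.
From mathcomp Require Import zify.
Import GRing.Theory.
Local Open Scope ring_scope.
Set Implicit Arguments. Unset Strict Implicit. Unset Printing Implicit Defensive.

Definition madd n (u v : mono n) : mono n := [ffun x => (u x + v x)%N].
Definition Rset n (D : mono n) : {set {set 'I_n}} := [set A | mono_dvd (vlabel A) D].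
Definition Qset n (P : {set {set 'I_n}}) (D : mono n) := P :&: Rset D.
Definition Mmin n (P : {set {set 'I_n}}) (D : mono n) := \bigcap_(A in Qset P D) A.

Lemma vlabelE n (A : {set 'I_n}) j b :
  vlabel A (j, b) = (if b then j \notin A else j \in A) :> nat.
Proof. by rewrite /vlabel /mAB ffunE setDv !inE !orbF; case: b. Qed.

Lemma flabelE n (s : {set {set 'I_n}}) x : flabel s x = (\max_(A in s) vlabel A x)%N.
Proof.
rewrite /flabel; apply: (big_morph (fun f : mono n => f x) (id1 := 0%N) (op1 := maxn)).
  by move=> u v; rewrite ffunE.
by rewrite ffunE.
Qed.

Lemma flabel_dvd n (s : {set {set 'I_n}}) D : mono_dvd (flabel s) D = (s \subset Rset D).
Proof.
apply/forallP/subsetP.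
  move=> H A As; rewrite inE; apply/forallP => x; have := H x.
  by rewrite flabelE => /bigmax_leqP; apply.
move=> H x; rewrite flabelE; apply/bigmax_leqP => A As.
by have := H A As; rewrite inE => /forallP; apply.
Qed.

Lemma flabel_mono n (s s' : {set {set 'I_n}}) : s \subset s' -> forall x, (flabel s x <= flabel s' x)%N.
Proof.
move=> ss x; rewrite !flabelE; apply/bigmax_leqP => A As.
by apply: (leq_bigmax_cond (P := mem s')); apply: (subsetP ss).
Qed.

Lemma dvd_div_madd n (a b w : mono n) : mono_dvd (mono_div a b) w = mono_dvd a (madd w b).
Proof. by apply/forallP/forallP => H x; move: (H x); rewrite !ffunE; move: (a x) (b x) (w x) => ? ? ?; lia. Qed.

Lemma madd_div n (a b w : mono n) : (forall x, b x <= a x)%N -> mono_dvd (mono_div a b) w ->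
  madd (mono_div w (mono_div a b)) a = madd w b.
Proof. by move=> ba /forallP H; apply/ffunP => x; have := ba x; have := H x; rewrite !ffunE; move: (a x) (b x) (w x) => ? ? ?; lia. Qed.

Lemma div_div n (a b w : mono n) : (forall x, b x <= a x)%N -> mono_dvd (mono_div a b) w ->
  mono_div w (mono_div a b) = mono_div (madd w b) a.
Proof. by move=> ba /forallP H; apply/ffunP => x; have := ba x; have := H x; rewrite !ffunE; move: (a x) (b x) (w x) => ? ? ?; lia. Qed.

Lemma madd_divK n (D b : mono n) : mono_dvd b D -> madd (mono_div D b) b = D.
Proof. by move=> /forallP H; apply/ffunP => x; have := H x; rewrite !ffunE; move: (D x) (b x) => ? ?; lia. Qed.

Lemma div_maddK n (w b : mono n) : mono_div (madd w b) b = w.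
Proof. by apply/ffunP => x; rewrite !ffunE addnK. Qed.

Lemma dvd_madd n (w b : mono n) : mono_dvd b (madd w b).
Proof. by apply/forallP => x; rewrite !ffunE leq_addl. Qed.

Lemma guardE n (t : {set {set 'I_n}}) C w :
  mono_dvd (mono_div (flabel (C |: t)) (flabel t)) w = (C \in Rset (madd w (flabel t))).
Proof.
rewrite dvd_div_madd flabel_dvd subUset sub1set -flabel_dvd dvd_madd andbT //.
Qed.

Lemma madd_div_t n (t : {set {set 'I_n}}) C w :
  mono_dvd (mono_div (flabel (C |: t)) (flabel t)) w ->
  madd (mono_div w (mono_div (flabel (C |: t)) (flabel t))) (flabel (C |: t)) = madd w (flabel t).
Proof. by apply: madd_div; apply: flabel_mono; apply: subsetUr. Qed.

Lemma faceP n (P s : {set {set 'I_n}}) :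
  reflect (s \subset P /\ forall A B, A \in s -> B \in s -> (A \subset B) || (B \subset A))
          (isFace P s).
Proof.
apply: (iffP andP) => [[sP /forall_inP H]|[sP H]]; split=> //.
  by move=> A B As Bs; exact: (forall_inP (H A As) B Bs).
by apply/forall_inP => A As; apply/forall_inP => B Bs; exact: H.
Qed.

Lemma face_sub n (P s s' : {set {set 'I_n}}) : s \subset s' -> isFace P s' -> isFace P s.
Proof.
move=> ss /faceP[sP H]; apply/faceP; split; first exact: subset_trans sP.
by move=> A B As Bs; apply: H; apply: (subsetP ss).
Qed.

Lemma face_add n (P s : {set {set 'I_n}}) M : M \in P -> isFace P s ->
  (forall B, B \in s -> M \subset B) -> isFace P (M |: s).
Proof.
move=> MP /faceP[sP H] MB; apply/faceP; split.
  by rewrite subUset sub1set MP.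
move=> A B; rewrite !in_setU1 => /predU1P[->|As] /predU1P[->|Bs].
- by rewrite subxx.
- by rewrite MB.
- by rewrite MB // orbT.
- exact: H.
Qed.

Lemma Q_closed n (P : {set {set 'I_n}}) D A B : intersection_closed P ->
  A \in Qset P D -> B \in Qset P D -> A :&: B \in Qset P D.
Proof.
move=> icP; rewrite /Qset /Rset !inE => /andP[AP /forallP HA] /andP[BP /forallP HB].
rewrite icP //=; apply/forallP => -[j b]; have := HA (j,b); have := HB (j,b).
rewrite !vlabelE !inE.
by case: b; case: (j \in A); case: (j \in B) => /=; lia.
Qed.

Lemma Mmin_spec n (P : {set {set 'I_n}}) D A0 : intersection_closed P -> A0 \in Qset P D ->
  Mmin P D \in Qset P D /\ (forall B, B \in Qset P D -> Mmin P D \subset B).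
Proof.
move=> icP A0Q.
have minB : forall B, B \in Qset P D -> Mmin P D \subset B.
  by move=> B BQ; exact: bigcap_inf.
split=> //.
case: (@arg_minnP _ A0 [pred A | A \in Qset P D] (fun A => #|A|) A0Q) => M0 M0Q M0min.
have M0sub : forall B, B \in Qset P D -> M0 \subset B.
  move=> B BQ; have MB := Q_closed icP M0Q BQ.
  have le := M0min _ MB.
  have : M0 :&: B == M0 by rewrite eqEcard subsetIl le.
  by move/eqP/setIidPl.
have -> : Mmin P D = M0.
  by apply/eqP; rewrite eqEsubset minB //; apply/bigcapsP.
done.
Qed.
Definition dch (k : fieldType) n (P : {set {set 'I_n}}) (i : nat) (c : chain k n) : chain k n :=
  fun s u => if isFace P s && (#|s| == i.+2)%N && (Mmin P (madd u (flabel s)) \in s)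
    then c (s :\ Mmin P (madd u (flabel s)))
           (mono_div (madd u (flabel s)) (flabel (s :\ Mmin P (madd u (flabel s)))))
    else 0.

Lemma dch_supp (k : fieldType) n (P : {set {set 'I_n}}) (i : nat) (c : chain k n)
  (l : seq ({set {set 'I_n}} * mono n)) :
  (forall s u, c s u != 0 -> (s, u) \in l) ->
  inF P i.+1 (dch P i c).
Proof.
move=> cfin; split.
  by move=> s u; rewrite /dch; case: ifP => [/andP[/andP[-> ->]] //|]; rewrite eqxx.
exists [seq (let D := madd p.2 (flabel p.1) in
             (Mmin P D |: p.1, mono_div D (flabel (Mmin P D |: p.1)))) | p <- l].
move=> s u; rewrite /dch; set D := madd u (flabel s); set M := Mmin P D.
case: ifP => [/andP[/andP[sF _] Ms] cne|]; last by rewrite eqxx.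
apply/mapP; exists (s :\ M, mono_div D (flabel (s :\ M))); first exact: cfin.
rewrite /= madd_divK; last first.
  rewrite flabel_dvd; apply: subset_trans (subD1set s M) _.
  by rewrite -flabel_dvd /D dvd_madd.
by rewrite -/M setD1K // /D div_maddK.
Qed.

Theorem mainTheorem4 (k : fieldType) (n : nat) (P : {set {set 'I_n}}) :
  P != set0 -> intersection_closed P ->
  forall (i : nat) (c : chain k n),
    inF P i c -> (forall t w, bd P c t w = 0) ->
    exists d : chain k n, inF P i.+1 d /\ (forall t w, bd P d t w = c t w).
Proof.
move=> _ icP i c [csupp [l cfin]] cyc.
exists (dch P i c); split; first exact: dch_supp cfin.
move=> t w; rewrite /bd.
case tF: (isFace P t); last first.
  by case: (eqVneq (c t w) 0) => // /csupp; rewrite tF.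
case tsz: (#|t| == i.+1)%N; last first.
  case: (eqVneq (c t w) 0) => [->|/csupp]; last by rewrite tsz andbF.
  rewrite big1 // => C /andP[/andP[CP Ct] CtF].
  rewrite /dch cardsU1 Ct add1n eqSS tsz !andbF /=.
  by case: ifP => _; rewrite mulr0.
set D := madd w (flabel t).
have tR : t \subset Rset D by rewrite -flabel_dvd /D dvd_madd.
have tQ : t \subset Qset P D.
  by rewrite subsetI tR andbT; case/faceP: tF.
have /card_gt0P[A0 A0t] : (0 < #|t|)%N by rewrite (eqP tsz).
have [MQ Mmin_] := Mmin_spec icP (subsetP tQ _ A0t).
set M := Mmin P D in MQ Mmin_.
have MP : M \in P by move: MQ; rewrite inE => /andP[].
have MR : M \in Rset D by move: MQ; rewrite inE => /andP[].
have Mt_sub : forall B, B \in t -> M \subset B.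
  by move=> B Bt; apply: Mmin_; apply: (subsetP tQ).
have sgn0 : forall t0 : {set {set 'I_n}}, (forall B, B \in t0 -> M \subset B) ->
    #|[set D0 in t0 | D0 \proper M]| = 0%N.
  move=> t0 H; apply/eqP; rewrite cards_eq0; apply/eqP/setP => D0.
  rewrite !inE; case: (boolP (D0 \in t0)) => //= /H MD0.
  by rewrite properE MD0 andbF.
case Mt: (M \in t).
- set t' := t :\ M.
  have tt' : t = M |: t' by rewrite /t' setD1K.
  have t'F : isFace P t' := face_sub (subD1set t M) tF.
  have t'R : t' \subset Rset D := subset_trans (subD1set t M) tR.
  have Ddvd' : mono_dvd (flabel t') D by rewrite flabel_dvd.
  set w' := mono_div D (flabel t').
  have Dw' : madd w' (flabel t') = D by rewrite /w' madd_divK.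
  have := cyc t' w'; rewrite /bd t'F (bigD1 M) /=; last first.
    by rewrite MP /t' setD11 -tt' tF.
  rewrite sgn0; last by move=> B /setD1P[_ /Mt_sub].
  rewrite expr0 mul1r guardE Dw' MR /=.
  rewrite div_div; [|exact: flabel_mono (subsetUr _ _)| by rewrite guardE Dw'].
  rewrite Dw' -tt' /D div_maddK -/D.
  move/eqP; rewrite addr_eq0 => /eqP ->.
  rewrite -sumrN big_mkcond [RHS]big_mkcond /=; apply: eq_bigr => C _.
  case: (eqVneq C M) => [->|CM].
    by rewrite Mt /= andbF /= andbF.
  have Ct'E : (C \in t') = (C \in t) by rewrite /t' in_setD1 CM.
  rewrite Ct'E /= andbT guardE -/D guardE Dw'.
  case CR: (C \in Rset D); last by rewrite !mulr0 oppr0 !if_same.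
  case CP: (C \in P); last by rewrite /= ?oppr0.
  case Ct: (C \in t) => /=; first by rewrite ?oppr0.
  have MC : M \subset C by apply: Mmin_; rewrite inE CP CR.
  have fE : isFace P (C |: t) = isFace P (C |: t').
    apply/idP/idP => [|H]; first by apply: face_sub; rewrite setUS // subD1set.
    rewrite tt' setUCA; apply: face_add => // B.
    by rewrite in_setU1 => /predU1P[->//|] /setD1P[_ /Mt_sub].
  rewrite /dch madd_div_t; last by rewrite guardE -/D CR.
  rewrite -/D -/M fE cardsU1 Ct /= add1n eqSS tsz in_setU1 Mt orbT andbT.
  case: (isFace P (C |: t')) => /=; last by rewrite ?oppr0.
  have sE : (C |: t) :\ M = C |: t'.
    apply/setP => B; rewrite /t' !inE.
    case: (eqVneq B M) => [->|] //=.
    by rewrite (eq_sym M) (negbTE CM).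
  rewrite sE div_div; [|exact: flabel_mono (subsetUr _ _)| by rewrite guardE Dw' CR].
  rewrite Dw'.
  have cardE : #|[set D0 in t | D0 \proper C]| = #|[set D0 in t' | D0 \proper C]|.+1.
    rewrite (cardsD1 M) inE Mt properEneq eq_sym CM MC /= add1n; congr (_.+1).
    by apply: eq_card => B; rewrite /t' !inE andbA.
  by rewrite cardE exprS mulN1r mulNr.
- rewrite (bigD1 M) /=; last first.
    by rewrite MP Mt face_add.
  rewrite big1 ?addr0; last first.
    move=> C /andP[_ CM].
    case: ifP => [g|_]; last by rewrite mulr0.
    rewrite /dch madd_div_t // -/D -/M.
    by rewrite in_setU1 (eq_sym M) (negbTE CM) Mt !andbF mulr0.
  rewrite sgn0 // expr0 mul1r guardE -/D MR.
  rewrite /dch madd_div_t ?guardE -/D // -/M.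
  rewrite face_add // cardsU1 Mt /= add1n eqSS tsz setU11 /= setU1K ?Mt //.
  by rewrite /D div_maddK.
Qed.
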